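(* If $M$ is a thin representation of $Q$ (i.e. $\dim M_p\le1$ for all $p\in Q_0$), then for any ordered basis $\mathcal B$ the reduced Schubert system $\overline\Sigma$ of $M$ with respect to $\mathcal B$ is trivial (has no vertices). Consequently, for every dimension vector $\underline e$, the Schubert decomposition $\mathrm{Gr}_{\underline e}(M)=\coprod_{\beta}C_\beta^M$ is a decomposition into affine spaces; more precisely, $\mathrm{Gr}_{\underline e}(M)$ is a point if there exists an extremal successor closed $\beta\subset\mathcal B$ of type $\underline e$, and $\mathrm{Gr}_{\underline e}(M)$ is empty otherwise.
   Context: Let $Q$ be a quiver with finite $Q_0,Q_1$ and $M$ a finite-dimensional complex representation with ordered basis $\mathcal B=\bigcup_p\mathcal B_p$ (bases $\mathcal B_p$ of $M_p$, total order on $\mathcal B$). For $v:p\to q$, $i\in\mathcal B_p$ write $M_v(i)=\sum_j\mu_{v,i,j}j$; the coefficient quiver $\Gamma$ has vertices $\mathcal B$ and arrows $(v,i,j)$ from $i$ to $j$ with $\mu_{v,i,j}\ne0$; $F:\Gamma\to Q$ is the natural map. An arrow $(v,s,t)$ of $\Gamma$ is extremal if for all arrows $(v,s',t')\in\Gamma_1$ other than $(v,s,t)$, $s<s'$ or $t'<t$. $\beta\subset\mathcal B$ is extremal successor closed if for every extremal arrow $(v,s,t)$, $s\in\beta$ implies $t\in\beta$; $\beta$ is of type $\underline e$ if $|\beta\cap\mathcal B_p|=e_p$ for all $p$. Schubert decomposition: identify $M$ with $\mathbb C^d$ via $\mathcal B$, subrepresentations $N$ with $\bigoplus_pN_p$;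 $\mathrm{Gr}_{\underline e}(M)$ is the variety of subrepresentations with $\dim N_p=e_p$; for $|\beta|=e$, $\Delta_\beta$ is the Plücker coordinate, $\beta\le\beta'$ iff the $l$-th smallest element of $\beta$ is $\le$ that of $\beta'$ for all $l$, $C_\beta(d)=\{V:\Delta_\beta(V)\ne0,\Delta_{\beta'}(V)=0\ \forall\beta'>\beta\}$, $C^M_\beta=C_\beta(d)\cap\mathrm{Gr}_{\underline e}(M)$ for $\beta$ of type $\underline e$, and $\mathrm{Gr}_{\underline e}(M)=\coprod_{\beta\text{ of type }\underline e}C_\beta^M$. It is a decomposition into affine spaces if every cell is empty or an affine space. Reduced Schubert system: relevant pairs $\mathrm{Rel}^2=\{(i,j)\in\mathcal B^2:F(i)=F(j),i\le j\}$; relevant triples $\mathrm{Rel}^3$ = triples $(v,t,s)$ with $v:p\to q$, $s\in F^{-1}(p)$, $t\in F^{-1}(q)$ such that some $(v,s',t')\in\Gamma_1$ has $s\ge s'$ and $t\le t'$. For such a triple let $\overline E(v,t,s)=\sum_{(v,s,t')\in\Gamma_1,t<t'}\mu_{v,s,t'}w_{t,t'}+\sum_{(v,s',t')\in\Gamma_1,t<t',s'<s}\mu_{v,s',t'}w_{t,t'}w_{s',s}-\sum_{(v,s',t)\in\Gamma_1,s'<s}\mu_{v,s',t}w_{s',s}-\mu_{v,s,t}$ (with $\mu_{v,s,t}=0$ if $(v,s,t)\notin\Gamma_1$). The reduced Schubert system $\overline\Sigma$ is the graph with vertex set $\{(i,j)\in\mathrm{Rel}^2:i<j\}\sqcup\{(v,t,s)\in\mathrm{Rel}^3:(v,s,t)\text{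 is not an extremal arrow of }\Gamma\}$, an edge $\{(v,t,s),(i,j)\}$ iff $w_{i,j}$ occurs in $\overline E(v,t,s)$, and links $((v,t,s),S)$ for each monomial $\prod_{(i,j)\in S}w_{i,j}$ (possibly $S=\emptyset$) occurring in $\overline E(v,t,s)$ with nonzero coefficient. *)

(* Defs.v *)
(* Quiver representations with an ordered basis, written in
   coordinates; Grassmannians of subrepresentations as row spaces (mxalgebra);
   Schubert cells via Pluecker coordinates; "affine space" via polynomial
   maps (multinomials' mpoly). *)
From HB Require Import structures.
From mathcomp Require Import all_boot all_order all_algebra.
From mathcomp Require Import mpoly.
Set Implicit Arguments. Unset Strict Implicit. Unset Printing Implicit Defensive.
Import Order.TTheory GRing.Theory.
Local Open Scope ring_scope.

Section QuiverRep.
Variable K : fieldType.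
Variables (Q0 Q1 : finType) (src tgt : Q1 -> Q0).
(* representation M with ordered basis B = 'I_d (natural order);
   F i = the vertex p with i in B_p;  M_v(i) = \sum_j mu v i j * j *)
Variables (d : nat) (F : 'I_d -> Q0) (mu : Q1 -> 'I_d -> 'I_d -> K).

Definition cq_arrow (v : Q1) (i j : 'I_d) : bool := mu v i j != 0.

Definition extremal (v : Q1) (s t : 'I_d) : bool :=
  cq_arrow v s t &&
  [forall s' : 'I_d, forall t' : 'I_d,
     (cq_arrow v s' t' && ((s', t') != (s, t))) ==> ((s < s')%N || (t' < t)%N)].

Definition ext_succ_closed (beta : {set 'I_d}) : Prop :=
  forall v s t, extremal v s t -> s \in beta -> t \in beta.

Definition of_type (e : Q0 -> nat) (beta : {set 'I_d}) : Prop :=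
  forall p, #|[set i in beta | F i == p]| = e p.

Definition Rel2 (i j : 'I_d) : bool := (F i == F j) && (i <= j)%N.

Definition Rel3 (v : Q1) (t s : 'I_d) : bool :=
  (F s == src v) && (F t == tgt v) &&
  [exists s' : 'I_d, exists t' : 'I_d,
     [&& cq_arrow v s' t', (s' <= s)%N & (t <= t')%N]].

Definition rss_vertex (x : ('I_d * 'I_d) + (Q1 * 'I_d * 'I_d)) : bool :=
  match x with
  | inl (i, j) => Rel2 i j && (i < j)%N
  | inr (v, t, s) => Rel3 v t s && ~~ extremal v s t
  end.

Definition rss_trivial : Prop := forall x, ~~ rss_vertex x.

(* M_p as a coordinate subspace of K^d (row vectors) *)
Definition Msp (p : Q0) : 'M[K]_d := diag_mx (\row_i (F i == p)%:R).
(* M_v as a matrix acting on row vectors *)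
Definition Mmx (v : Q1) : 'M[K]_d := \matrix_(i, j) mu v i j.
Definition Npart (N : 'M[K]_d) (p : Q0) : 'M[K]_d := (N :&: Msp p)%MS.

Definition is_subrep (N : 'M[K]_d) : bool :=
  (N == \sum_p Npart N p)%MS &&
  [forall v : Q1, (Npart N (src v) *m Mmx v <= Npart N (tgt v))%MS].

Definition Gr (e : Q0 -> nat) (N : 'M[K]_d) : Prop :=
  is_subrep N /\ forall p, \rank (Npart N p) = e p.

(* column selection matrix: picks the elements of beta in increasing order *)
Definition selmx (e : nat) (beta : {set 'I_d}) : 'M[K]_(d, e) :=
  \matrix_(j, l) ((j \in beta) && (#|[set k in beta | (k < j)%N]| == l))%:R.

(* Pluecker coordinate Delta_beta of the row space of N, computed on the
   basis row_base N (well defined up to a nonzero scalar) *)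
Definition plucker (N : 'M[K]_d) (beta : {set 'I_d}) : K :=
  if #|beta| == \rank N then \det (row_base N *m selmx (\rank N) beta) else 0.

(* beta <= beta' : l-th smallest element of beta <= that of beta' *)
Definition le_set (beta beta' : {set 'I_d}) : bool :=
  all2 (fun x y : 'I_d => (x <= y)%N) (enum beta) (enum beta').
Definition lt_set (beta beta' : {set 'I_d}) : bool :=
  (beta' != beta) && le_set beta beta'.

Definition schubert_cell (beta : {set 'I_d}) (N : 'M[K]_d) : Prop :=
  plucker N beta != 0 /\
  forall beta', lt_set beta beta' -> plucker N beta' = 0.

Definition cellM (e : Q0 -> nat) (beta : {set 'I_d}) (N : 'M[K]_d) : Prop :=
  schubert_cell beta N /\ Gr e N.

(* A subset X of C_beta(d) is an affine space: it is isomorphic to A^n,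
   in the standard affine coordinates of C_beta(d) (the unique basis matrix
   A of V with A restricted to the columns beta equal to the identity):
   there is a polynomial map f : A^n -> {matrices A} landing in X,
   a polynomial map g in the entries of A inverting it, and f is onto X. *)
Definition affine_cell (beta : {set 'I_d}) (X : 'M[K]_d -> Prop) : Prop :=
  exists (n : nat) (f : 'M[{mpoly K[n]}]_(#|beta|, d))
         (g : 'I_n -> {mpoly K[#|beta| * d]}),
    let fx (x : 'I_n -> K) := map_mx (fun P : {mpoly K[n]} => P.@[x]) f in
    [/\ forall x, X (<<fx x>>)%MS,
        forall x, fx x *m selmx #|beta| beta = 1%:M,
        forall x i, (g i).@[fun k => mxvec (fx x) 0 k] = x i
      & forall V, X V -> exists x, (<<fx x>> == V)%MS].

End QuiverRep.

(* Main.v *)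
Require Import Defs.
From HB Require Import structures.
From mathcomp Require Import all_boot all_order all_algebra.
From mathcomp Require Import mpoly.
From Stdlib Require Import Classical_Prop.
Set Implicit Arguments. Unset Strict Implicit. Unset Printing Implicit Defensive.
Import Order.TTheory GRing.Theory.
Local Open Scope ring_scope.
Section Helpers.
Variables (K : fieldType) (Q0 Q1 : finType) (src tgt : Q1 -> Q0).
Variables (d : nat) (F : 'I_d -> Q0) (mu : Q1 -> 'I_d -> 'I_d -> K).
Hypothesis hmu : forall v i j, mu v i j != 0 -> F i = src v /\ F j = tgt v.
Hypothesis thin : forall p : Q0, (#|[set i | F i == p]| <= 1)%N.

Lemma Finj i j : F i = F j -> i = j.
Proof.
move=> Fij; have := thin (F j).
move/card_le1_eqP; apply; by rewrite inE ?Fij.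
Qed.

Lemma all_extremal v s t : mu v s t != 0 -> extremal mu v s t.
Proof.
move=> nz; rewrite /extremal /cq_arrow nz /=.
apply/forallP => s'; apply/forallP => t'; apply/implyP => /andP[nz' ne].
have [h1 h2] := hmu nz; have [h1' h2'] := hmu nz'.
have es : s' = s by apply: Finj; rewrite h1 h1'.
have et : t' = t by apply: Finj; rewrite h2 h2'.
by move: ne; rewrite es et eqxx.
Qed.

Lemma rss_triv : rss_trivial src tgt F mu.
Proof.
case=> [[i j]|[[v t] s]] /=.
  rewrite /Rel2; apply/negP => /andP[/andP[/eqP /Finj -> _]]; by rewrite ltnn.
rewrite /Rel3; apply/negP => /andP[/andP[/andP[/eqP Fs /eqP Ft]]].
move=> /existsP[s' /existsP[t' /and3P[nz _ _]]].
have [h1 h2] := hmu nz.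
have es : s' = s by apply: Finj; rewrite h1 Fs.
have et : t' = t by apply: Finj; rewrite h2 Ft.
by move: nz; rewrite es et => /all_extremal ->.
Qed.

Definition Dm (b : {set 'I_d}) : 'M[K]_d := diag_mx (\row_i (i \in b)%:R).

Lemma MspE p : Msp K F p = Dm [set i | F i == p].
Proof. by rewrite /Msp /Dm; congr diag_mx; apply/rowP => i; rewrite !mxE inE. Qed.

Lemma subDP m (A : 'M[K]_(m, d)) (b : {set 'I_d}) :
  reflect (forall r i, i \notin b -> A r i = 0) (A <= Dm b)%MS.
Proof.
apply: (iffP submxP).
  move=> [W ->] r i nb; by rewrite mul_mx_diag !mxE (negbTE nb) mulr0.
move=> H; exists A; apply/matrixP => r i; rewrite mul_mx_diag !mxE.
by case: (boolP (i \in b)) => ib; rewrite ?mulr1 // H // mulr0.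
Qed.

Lemma deltaD (j : 'I_d) (b : {set 'I_d}) : ((delta_mx 0 j : 'rV[K]_d) <= Dm b)%MS = (j \in b).
Proof.
apply/subDP/idP.
  move=> H; apply/negPn/negP => nb; have := H 0 j nb.
  by rewrite mxE !eqxx /= => /eqP; rewrite oner_eq0.
by move=> jb r i ib; rewrite mxE; case: (i =P j) => [ei|_]; [by move: ib; rewrite ei jb | by rewrite andbF].
Qed.

Lemma rowD (b : {set 'I_d}) i : row i (Dm b) = (i \in b)%:R *: delta_mx 0 i.
Proof. by rewrite row_diag_mx mxE. Qed.

Lemma DmS m (N : 'M[K]_(m, d)) (b : {set 'I_d}) :
  (forall i, i \in b -> ((delta_mx 0 i : 'rV[K]_d) <= N)%MS) -> (Dm b <= N)%MS.
Proof.
move=> H; apply/row_subP => i; rewrite rowD.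
by case: (boolP (i \in b)) => ib; rewrite ?scale0r ?sub0mx // scalemx_sub // H.
Qed.

End Helpers.

Section Sel.
Variables (K : fieldType) (d : nat).
Implicit Types (b : {set 'I_d}).

Definition rk b (j : 'I_d) : nat := #|[set k in b | (k < j)%N]|.

Lemma rk_lt b j : j \in b -> (rk b j < #|b|)%N.
Proof.
move=> jb; apply: proper_card; rewrite properE; apply/andP; split.
  by apply/subsetP => k; rewrite inE => /andP[].
apply/negP => /subsetP /(_ j jb); by rewrite inE ltnn andbF.
Qed.

Lemma rk_mono b (j k : 'I_d) : j \in b -> (j < k)%N -> (rk b j < rk b k)%N.
Proof.
move=> jb jk; apply: proper_card; rewrite properE; apply/andP; split.
  apply/subsetP => x; rewrite !inE => /andP[-> /= xj]; exact: ltn_trans xj jk.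
apply/negP => /subsetP /(_ j); rewrite !inE jb jk ltnn andbF; by move/(_ isT).
Qed.

Lemma rk_inj b j k : j \in b -> k \in b -> rk b j = rk b k -> j = k.
Proof.
move=> jb kb e; apply: val_inj => /=.
case: (ltngtP j k) => // h.
  by have := rk_mono jb h; rewrite e ltnn.
by have := rk_mono kb h; rewrite e ltnn.
Qed.

Lemma rk_surj b (l : 'I_#|b|) : exists2 j, j \in b & rk b j = l.
Proof.
pose f (j : 'I_d) : 'I_#|b| := insubd l (rk b j).
have finj : {in b &, injective f}.
  move=> j k jb kb /(congr1 val); rewrite /f /= !insubdK; [exact: rk_inj| exact: rk_lt | exact: rk_lt].
have c := card_in_imset finj.
have : l \in [set f x | x in b].
  have /subset_cardP : #|[set f x | x in b]| = #|[set: 'I_#|b|]| by rewrite cardsT card_ord.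
  move/(_ (subsetT _)) => /(_ l); by rewrite inE => ->.
case/imsetP => j jb ->; exists j => //; by rewrite /f insubdK // ; exact: rk_lt.
Qed.

Definition Sel b : 'M[K]_(d, #|b|) := selmx K #|b| b.

Lemma SelE b j (l : 'I_#|b|) : Sel b j l = ((j \in b) && (rk b j == l))%:R.
Proof. by rewrite mxE. Qed.

Lemma SelTS b : (Sel b)^T *m Sel b = 1%:M.
Proof.
apply/matrixP => l l'; rewrite !mxE.
have [j0 j0b rj0] := rk_surj l.
rewrite (bigD1 j0) //= big1 ?addr0.
  rewrite !mxE; rewrite /rk in rj0; rewrite j0b rj0 eqxx mul1r /=; congr (_%:R); by rewrite val_eqE.
move=> j nj; rewrite !mxE -/(rk b j); case: (boolP ((j \in b) && (rk b j == l))) => [/andP[jb /eqP rj]|_].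
  by case/eqP: nj; apply: (@rk_inj b) => //; rewrite rj rj0.
by rewrite /= mulr0n mul0r.
Qed.

Lemma SelST b : Sel b *m (Sel b)^T = diag_mx (\row_i (i \in b)%:R).
Proof.
apply/matrixP => j k; rewrite !mxE.
case: (boolP (j \in b)) => jb; last first.
  rewrite mul0rn big1 // => l _; by rewrite !mxE (negbTE jb) mul0r.
pose l0 : 'I_#|b| := Ordinal (rk_lt jb).
rewrite (bigD1 l0) //= big1 ?addr0.
  rewrite !mxE jb eqxx mul1r /=.
  case: (boolP (k \in b)) => kb /=; last first.
    by case: eqP => // ejk; move: kb; rewrite -ejk jb.
  case: (j =P k) => [->|njk]; first by rewrite eqxx.
  case: eqP => // e; case: njk; apply: (@rk_inj b) => //.
move=> l nl; rewrite !mxE jb /=; case: eqP => [e|]; last by rewrite mul0r.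
by case/eqP: nl; apply: val_inj => /=; rewrite -e.
Qed.

End Sel.

Section LinAlg.
Variables (K : fieldType) (d : nat).
Implicit Types (b : {set 'I_d}).
Local Notation Dm := (@Dm K d).
Local Notation Sel := (@Sel K d).

Lemma DmE b : diag_mx (\row_i (i \in b)%:R) = Dm b.
Proof. by []. Qed.

Lemma mulDm m (X : 'M[K]_(m, d)) b : (X <= Dm b)%MS -> X *m Dm b = X.
Proof.
move/subDP => H; apply/matrixP => r i; rewrite mul_mx_diag !mxE.
by case: (boolP (i \in b)) => ib; rewrite ?mulr1 // H // mulr0.
Qed.

Lemma SelT_sub b : ((Sel b)^T <= Dm b)%MS.
Proof. by apply/subDP => r i ib; rewrite !mxE (negbTE ib). Qed.

Lemma Dm_sub_SelT b : (Dm b <= (Sel b)^T)%MS.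
Proof. by rewrite -DmE -SelST submxMl. Qed.

Lemma rank_SelT b : \rank (Sel b)^T = #|b|.
Proof.
apply/eqP; rewrite eqn_leq rank_leq_row /=.
by rewrite -{1}(mxrank1 K #|b|) -(SelTS K b) mxrankM_maxl.
Qed.

Lemma rank_Dm b : \rank (Dm b) = #|b|.
Proof.
rewrite -(rank_SelT b); apply: eqmx_rank; by rewrite Dm_sub_SelT SelT_sub.
Qed.

Lemma det_ne0 e (X : 'M[K]_(e, d)) b :
  e = #|b| -> row_free X -> (X <= Dm b)%MS -> \det (X *m selmx K e b) != 0.
Proof.
move=> eb; subst e => fX sX.
have XE : X = (X *m Sel b) *m (Sel b)^T by rewrite -mulmxA SelST DmE mulDm.
have fY : row_free (X *m Sel b).
  rewrite /row_free eqn_leq rank_leq_row /=.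
  move: fX; rewrite /row_free => /eqP {1}<-.
  by rewrite {1}XE mxrankM_maxl.
by move: fY; rewrite row_free_unit unitmxE unitfE.
Qed.

Lemma det_0 e (X : 'M[K]_(e, d)) b b' j :
  e = #|b'| -> (X <= Dm b)%MS -> j \in b' -> j \notin b ->
  \det (X *m selmx K e b') = 0.
Proof.
move=> eb; subst e => sX jb' njb.
pose l0 : 'I_#|b'| := Ordinal (rk_lt jb').
have c0 : col l0 (X *m Sel b') = 0.
  apply/matrixP => r c; rewrite !mxE big1 // => k _.
  rewrite !mxE; case: (boolP (k \in b)) => kb.
    case: (boolP ((k \in b') && (rk b' k == l0))) => [/andP[kb' /eqP rk0]|_].
      by move: kb; rewrite (@rk_inj d b' k j) // (negbTE njb).
    by rewrite /= mulr0n mulr0.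
  by rewrite (subDP _ _ sX r k kb) mul0r.
apply/eqP; apply/negPn/negP; rewrite -unitfE -unitmxE => U.
have : (delta_mx l0 0 : 'cV[K]_#|b'|) = 0.
  by rewrite -(mulKmx U (delta_mx l0 0)) -colE c0 mulmx0.
by move/matrixP/(_ l0 0); rewrite !mxE !eqxx /= => /eqP; rewrite oner_eq0.
Qed.

Lemma rank_row_base m (N : 'M[K]_(m, d)) b : (N == Dm b)%MS -> \rank N = #|b|.
Proof. by move/eqmx_rank ->; rewrite rank_Dm. Qed.

Lemma plucker_ne0 (N : 'M[K]_d) b : (N == Dm b)%MS -> plucker N b != 0.
Proof.
move=> eN; have rN := rank_row_base eN.
rewrite /plucker; case: ifP => [_|]; last by rewrite rN eqxx.
apply: det_ne0 => //.
  exact: row_base_free.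
by rewrite (eq_row_base N) (eqmxP eN).
Qed.

Lemma plucker_0 (N : 'M[K]_d) b b' : (N == Dm b)%MS -> b' != b -> plucker N b' = 0.
Proof.
move=> eN nb; have rN := rank_row_base eN.
rewrite /plucker; case: eqP => // cb.
have [j jb' njb] : exists2 j, j \in b' & j \notin b.
  case: (boolP (b' \subset b)) => sb.
    by case/eqP: nb; apply/eqP; rewrite eqEcard sb cb rN leqnn.
  by case/subsetPn: sb => j; exists j.
apply: (det_0 (b := b) (j := j)) => //.
by rewrite (eq_row_base N) (eqmxP eN).
Qed.

End LinAlg.

Section Main.
Variables (K : fieldType) (Q0 Q1 : finType) (src tgt : Q1 -> Q0).
Variables (d : nat) (F : 'I_d -> Q0) (mu : Q1 -> 'I_d -> 'I_d -> K).
Hypothesis hmu : forall v i j, mu v i j != 0 -> F i = src v /\ F j = tgt v.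
Hypothesis thin : forall p : Q0, (#|[set i | F i == p]| <= 1)%N.
Local Notation Dm := (@Dm K d).

Definition betaN (N : 'M[K]_d) : {set 'I_d} :=
  [set i | ((delta_mx 0 i : 'rV[K]_d) <= N)%MS].

Lemma lemA (u : 'rV[K]_d) (N : 'M[K]_d) p j :
  (u <= N)%MS -> (u <= Msp K F p)%MS -> u 0 j != 0 -> j \in betaN N.
Proof.
move=> uN; rewrite MspE => /subDP uM nz.
have Fj : F j = p.
  apply/eqP; apply: contraR nz => Fj; apply/eqP; apply: uM; by rewrite inE.
have uE : u = u 0 j *: delta_mx 0 j.
  apply/rowP => k; rewrite !mxE eqxx /=.
  case: (k =P j) => [->|nk]; first by rewrite mulr1.
  rewrite mulr0 uM // inE; apply/eqP => Fk; apply: nk; apply: (Finj thin).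
  by rewrite Fk Fj.
rewrite inE; have -> : (delta_mx 0 j : 'rV[K]_d) = (u 0 j)^-1 *: u.
  by rewrite {2}uE scalerA mulVf // scale1r.
exact: scalemx_sub.
Qed.

Lemma Npart_eq (N : 'M[K]_d) p :
  (Npart F N p == Dm [set i in betaN N | F i == p])%MS.
Proof.
apply/andP; split.
  apply/subDP => r i; rewrite inE negb_and => H.
  apply/eqP; apply/negPn/negP => nz.
  have rN : (row r (Npart F N p) <= Npart F N p)%MS by exact: row_sub.
  have r1 : (row r (Npart F N p) <= N)%MS by exact: submx_trans rN (capmxSl _ _).
  have r2 : (row r (Npart F N p) <= Msp K F p)%MS by exact: submx_trans rN (capmxSr _ _).
  have nz' : row r (Npart F N p) 0 i != 0 by rewrite mxE.
  have ib := lemA r1 r2 nz'.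
  move: H; rewrite ib /= => /eqP; apply.
  move: r2; rewrite MspE => /subDP r2; apply/eqP/negPn/negP => Fi.
  by move: nz'; rewrite r2 ?eqxx // inE.
apply: DmS => i; rewrite !inE => /andP[iN Fi].
by rewrite sub_capmx iN MspE deltaD inE.
Qed.

Lemma rank_Npart (N : 'M[K]_d) p :
  \rank (Npart F N p) = #|[set i in betaN N | F i == p]|.
Proof. by rewrite (eqmx_rank (Npart_eq N p)) rank_Dm. Qed.

Lemma betaN_Dm (N : 'M[K]_d) b : (N == Dm b)%MS -> betaN N = b.
Proof. by move/eqmxP => eN; apply/setP => i; rewrite inE eN deltaD. Qed.

Lemma DmSub (b1 b2 : {set 'I_d}) : b1 \subset b2 -> (Dm b1 <= Dm b2)%MS.
Proof. by move=> h; apply: DmS => i ib; rewrite deltaD (subsetP h). Qed.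

Lemma Gr_char e (N : 'M[K]_d) : Gr src tgt F mu e N ->
  [/\ (N == Dm (betaN N))%MS, of_type F e (betaN N) & ext_succ_closed mu (betaN N)].
Proof.
case=> /andP[/andP[Nsum _] /forallP Hv] Hr; split.
- apply/andP; split; last by apply: DmS => i; rewrite inE.
  apply: submx_trans Nsum _; apply/sumsmx_subP => p _.
  apply: submx_trans (DmSub _); first exact: (proj1 (andP (Npart_eq N p))).
  by apply/subsetP => i; rewrite inE => /andP[].
- by move=> p; rewrite -rank_Npart Hr.
move=> v s t /andP[nz _] sN.
have [Fs Ft] := hmu nz.
have ds : ((delta_mx 0 s : 'rV[K]_d) <= Npart F N (src v))%MS.
  by rewrite sub_capmx MspE deltaD inE Fs eqxx andbT; move: sN; rewrite inE.
have du := submx_trans (submxMr (Mmx mu v) ds) (Hv v).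
apply: (lemA (submx_trans du (capmxSl _ _)) (submx_trans du (capmxSr _ _))).
by rewrite -rowE !mxE.
Qed.

Lemma cardF (b : {set 'I_d}) i : #|[set k in b | F k == F i]| = (i \in b).
Proof.
case: (boolP (i \in b)) => ib.
  rewrite (_ : [set k in b | F k == F i] = [set i]) ?cards1 //.
  apply/setP => k; rewrite !inE; apply/andP/eqP => [[_ /eqP]|->]; last by rewrite ib eqxx.
  exact: (Finj thin).
rewrite (_ : [set k in b | F k == F i] = set0) ?cards0 //.
apply/setP => k; rewrite !inE; apply/andP => [[kb /eqP /(Finj thin) ek]].
by move: ib; rewrite -ek kb.
Qed.

Lemma type_uniq e (b1 b2 : {set 'I_d}) : of_type F e b1 -> of_type F e b2 -> b1 = b2.
Proof.
move=> H1 H2; apply/setP => i; have := H1 (F i); rewrite -(H2 (F i)) !cardF.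
by case: (i \in b1); case: (i \in b2).
Qed.

Lemma Gr_of e (N : 'M[K]_d) (b : {set 'I_d}) :
  (N == Dm b)%MS -> ext_succ_closed mu b -> of_type F e b -> Gr src tgt F mu e N.
Proof.
move=> eN cb tb; have bN := betaN_Dm eN.
split; last by move=> p; rewrite rank_Npart bN tb.
apply/andP; split.
  apply/andP; split; last by apply/sumsmx_subP => p _; exact: capmxSl.
  rewrite (eqmxP eN); apply: DmS => i ib; apply: (sumsmx_sup (F i)) => //.
  by rewrite sub_capmx (eqmxP eN) deltaD ib MspE deltaD inE eqxx.
apply/forallP => v.
have Ht := Npart_eq N (tgt v); rewrite bN in Ht.
apply: submx_trans (proj2 (andP Ht)); apply/subDP => r t.
rewrite inE negb_and => Ht'; rewrite mxE big1 // => k _.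
have /subDP Hs := proj1 (andP (Npart_eq N (src v))); rewrite bN in Hs.
case: (boolP ((k \in b) && (F k == src v))) => kS; last by rewrite Hs ?inE // mul0r.
case/andP: kS => kb /eqP Fk.
rewrite mxE; case: (boolP (mu v k t == 0)) => [/eqP ->|nz]; first by rewrite mulr0.
have [_ Ft] := hmu nz.
have tinb := cb _ _ _ (all_extremal hmu thin nz) kb.
by move: Ht'; rewrite tinb Ft eqxx.
Qed.

End Main.

Unset Implicit Arguments.
Theorem corollary2p22 (K : fieldType) (Q0 Q1 : finType) (src tgt : Q1 -> Q0)
    (d : nat) (F : 'I_d -> Q0) (mu : Q1 -> 'I_d -> 'I_d -> K)
    (hmu : forall v i j, mu v i j != 0 -> F i = src v /\ F j = tgt v)
    (thin : forall p : Q0, (#|[set i | F i == p]| <= 1)%N) :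
  rss_trivial src tgt F mu /\
  forall e : Q0 -> nat,
    (forall beta : {set 'I_d}, of_type F e beta ->
       (forall N, ~ cellM src tgt F mu e beta N) \/
       affine_cell beta (cellM src tgt F mu e beta)) /\
    ((exists beta, of_type F e beta /\ ext_succ_closed mu beta) ->
       exists N : 'M[K]_d, Gr src tgt F mu e N /\
         forall N' : 'M[K]_d, Gr src tgt F mu e N' -> (N' == N)%MS) /\
    (~ (exists beta, of_type F e beta /\ ext_succ_closed mu beta) ->
       forall N : 'M[K]_d, ~ Gr src tgt F mu e N).
Proof.
split; first exact: rss_triv hmu thin.
move=> e.
have GrE : forall N b, of_type F e b -> Gr src tgt F mu e N ->
    (N == Dm K b)%MS /\ ext_succ_closed mu b.
  move=> N b tb GN; have [eN tN cN] := Gr_char hmu thin GN.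
  by rewrite -(type_uniq thin tN tb).
have eqDm : forall b : {set 'I_d}, (Dm K b == Dm K b)%MS by move=> b; rewrite submx_refl.
split.
  move=> b tb; case: (classic (ext_succ_closed mu b)) => cb; last first.
    by left => N [_ GN]; apply: cb; case: (GrE N b tb GN).
  right.
  have eS : (<<(Sel K b)^T>> == Dm K b)%MS.
    by rewrite !genmxE SelT_sub Dm_sub_SelT.
  exists 0%N, (map_mx (fun c => c%:MP_[0]) (Sel K b)^T), (fun _ => 0).
  have fxE : forall x : 'I_0 -> K,
      map_mx (fun P : {mpoly K[0]} => P.@[x]) (map_mx (fun c => c%:MP_[0]) (Sel K b)^T)
      = (Sel K b)^T.
    by move=> x; apply/matrixP => i j; rewrite !mxE mevalC.
  cbv zeta; split.
  - move=> x; rewrite fxE; split; last exact: (Gr_of hmu thin eS cb tb).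
    split; first exact: plucker_ne0.
    by move=> b' /andP[nb _]; apply: plucker_0 eS nb.
  - by move=> x; rewrite fxE; exact: SelTS.
  - by move=> x [].
  - move=> V [_ GV]; exists (fun _ => 0); rewrite fxE.
    have [eV _] := GrE V b tb GV.
    by apply/andP; split; rewrite (eqmxP eS) (eqmxP eV).
split.
  move=> [b [tb cb]]; exists (Dm K b); split; first exact: (Gr_of hmu thin (eqDm b) cb tb).
  by move=> N' GN'; case: (GrE N' b tb GN').
move=> nb N GN; apply: nb; have [_ tN cN] := Gr_char hmu thin GN.
by exists (betaN N).
Qed.
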